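(* Let $F,G$ be complete Heyting sheaves (frame sheaves) on a locale $X$ and $\alpha:F\to G$ an order-preserving morphism. Then $\alpha$ is a frame morphism if and only if for each $u\in\mathcal{O}(X)$, $\alpha_u:F(u)\to G(u)$ is a frame homomorphism and for all $v\le u$ in $\mathcal{O}(X)$, $\alpha_u\circ f_{v,u}=g_{v,u}\circ\alpha_v$, where $f_{v,u}:F(v)\to F(u)$ and $g_{v,u}:G(v)\to G(u)$ are the left adjoints of the restriction maps $F(u)\to F(v)$ and $G(u)\to G(v)$.
   Context: Let $X$ be a locale with frame of opens $\mathcal{O}(X)$. A posheaf on $X$ is a sheaf of sets $F$ with (POS1) each $F(u)$ a poset; (POS2) restriction maps $F(u)\to F(v)$, $x\mapsto x|_v$ ($v\le u$), order-preserving; (POS3) if $u=\bigvee_i u_i$ and $s,t\in F(u)$ satisfy $s|_{u_i}\le t|_{u_i}$ for all $i$, then $s\le t$. A frame sheaf (complete Heyting sheaf) is a posheaf $F$ such that each $F(u)$ is a frame, each restriction map $F(u)\to F(v)$ ($v\le u$) is surjective and has a left adjoint $l_{v,u}$ and a right adjoint, and $x\wedge l_{v,u}(y)=l_{v,u}(x|_v\wedge y)$ for $x\in F(u)$, $y\in F(v)$. A morphism $\alpha$ of posheaves is order-preserving if each $\alpha_u$ is monotone. For complete posheaves, $sup_F:\mathbb{P}F\to F$ sends a subsheaf $S$ of $F^u$ (the restriction of $F$ to $\downarrow u$) to the least $z\in F(u)$ with $S(v)\subseteq\{y\mid y\le z|_v\}$ for all $v\le u$; $\alpha_*$ sends $S$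 to the subsheaf of $G^u$ generated by $v\mapsto\alpha_v(S(v))$; $\alpha$ is sup-preserving if $sup_G\circ\alpha_*=\alpha\circ sup_F$. $\alpha$ preserves finite meets if $m_G\circ(\alpha\times\alpha)=\alpha\circ m_F$, where $m_F$ is componentwise binary meet. A frame morphism is a sup-preserving morphism that preserves finite meets. *)

(* Defs.v *)
Set Implicit Arguments.
Unset Strict Implicit.

Definition is_lub {A : Type} (le : A -> A -> Prop) (S : A -> Prop) (z : A) : Prop :=
  (forall x, S x -> le x z) /\ (forall y, (forall x, S x -> le x y) -> le z y).

Definition is_glb2 {A : Type} (le : A -> A -> Prop) (a b m : A) : Prop :=
  le m a /\ le m b /\ (forall y, le y a -> le y b -> le y m).

Definition is_poset {A : Type} (le : A -> A -> Prop) : Prop :=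
  (forall x, le x x) /\
  (forall x y z, le x y -> le y z -> le x z) /\
  (forall x y, le x y -> le y x -> x = y).

Definition is_frame {A : Type} (le : A -> A -> Prop) : Prop :=
  is_poset le /\
  (forall S : A -> Prop, exists z, is_lub le S z) /\
  (forall a b : A, exists m, is_glb2 le a b m) /\
  (forall (a : A) (S : A -> Prop) (j m : A),
      is_lub le S j -> is_glb2 le a j m ->
      is_lub le (fun x => exists s, S s /\ is_glb2 le a s x) m).

Definition is_frame_hom {A B : Type} (leA : A -> A -> Prop) (leB : B -> B -> Prop)
  (f : A -> B) : Prop :=
  (forall (S : A -> Prop) z, is_lub leA S z ->
       is_lub leB (fun y => exists x, S x /\ y = f x) (f z)) /\
  (forall a b m, is_glb2 leA a b m -> is_glb2 leB (f a) (f b) (f m)).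

Record Locale := {
  opens :> Type;
  ole : opens -> opens -> Prop;
  ole_frame : is_frame ole
}.
Arguments ole : clear implicits.

Record Presheaf (X : Locale) := {
  sec :> X -> Type;
  res : forall u v : X, ole X v u -> sec u -> sec v;
  res_id : forall (u : X) (p : ole X u u) x, res p x = x;
  res_comp : forall (u v w : X) (p : ole X v u) (q : ole X w v) (r : ole X w u) x,
      res q (res p x) = res r x
}.
Arguments res {X} _ {u v} _ _.

Definition covers (X : Locale) (u : X) (I : Type) (ui : I -> X) : Prop :=
  is_lub (ole X) (fun w => exists i, w = ui i) u.

Definition is_sheaf (X : Locale) (F : Presheaf X) : Prop :=
  forall (u : X) (I : Type) (ui : I -> X) (pi : forall i, ole X (ui i) u)
         (s : forall i, F (ui i)),
    covers u ui ->
    (forall i j (w : X) (p : ole X w (ui i)) (q : ole X w (ui j)),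
        is_glb2 (ole X) (ui i) (ui j) w -> res F p (s i) = res F q (s j)) ->
    (exists t : F u, forall i, res F (pi i) t = s i) /\
    (forall t t' : F u, (forall i, res F (pi i) t = s i) ->
                        (forall i, res F (pi i) t' = s i) -> t = t').

Definition is_posheaf (X : Locale) (F : Presheaf X)
  (le : forall u : X, F u -> F u -> Prop) : Prop :=
  is_sheaf F /\
  (forall u, is_poset (le u)) /\
  (forall (u v : X) (p : ole X v u) x y, le u x y -> le v (res F p x) (res F p y)) /\
  (forall (u : X) (I : Type) (ui : I -> X) (pi : forall i, ole X (ui i) u) s t,
                covers u ui -> (forall i, le (ui i) (res F (pi i) s) (res F (pi i) t)) ->
                le u s t).

Record PoSheaf (X : Locale) := {
  psh :> Presheaf X;
  ple : forall u : X, psh u -> psh u -> Prop;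
  psh_pos : @is_posheaf X psh ple
}.
Arguments ple {X} _ {u} _ _.

Definition is_left_adjoint (X : Locale) (F : PoSheaf X) (u v : X) (p : ole X v u)
  (f : F v -> F u) : Prop :=
  forall (y : F v) (x : F u), ple F (f y) x <-> ple F y (res F p x).

Definition is_right_adjoint (X : Locale) (F : PoSheaf X) (u v : X) (p : ole X v u)
  (r : F v -> F u) : Prop :=
  forall (x : F u) (y : F v), ple F (res F p x) y <-> ple F x (r y).
Arguments is_left_adjoint {X} F {u v} p f.
Arguments is_right_adjoint {X} F {u v} p r.

Definition is_frame_sheaf (X : Locale) (F : PoSheaf X) : Prop :=
  (forall u : X, is_frame (@ple X F u)) /\
  (forall (u v : X) (p : ole X v u),
      (forall y : F v, exists x : F u, res F p x = y) /\
      (exists l : F v -> F u,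
          is_left_adjoint F p l /\
          (* Frobenius: x /\ l(y) = l(x|_v /\ y) *)
          (forall (x : F u) (y : F v) m1 m2,
              is_glb2 (@ple X F u) x (l y) m1 ->
              is_glb2 (@ple X F v) (res F p x) y m2 -> m1 = l m2)) /\
      (exists r : F v -> F u, is_right_adjoint F p r)).

Definition is_morphism (X : Locale) (F G : Presheaf X) (a : forall u : X, F u -> G u) : Prop :=
  forall (u v : X) (p : ole X v u) (x : F u), a v (res F p x) = res G p (a u x).

Definition order_preserving (X : Locale) (F G : PoSheaf X) (a : forall u : X, F u -> G u) : Prop :=
  forall (u : X) (x y : F u), ple F x y -> ple G (a u x) (a u y).

(* S is (the data of) a subsheaf of F^u, the restriction of F to the down-set of u:
   S v is a subset of F v, nonempty only for v <= u, closed under restriction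
   and under gluing along covers. *)
Definition is_subsheaf_at (X : Locale) (F : Presheaf X) (u : X)
  (S : forall v : X, F v -> Prop) : Prop :=
  (forall v x, S v x -> ole X v u) /\
  (forall (v w : X) (p : ole X w v) (x : F v), S v x -> S w (res F p x)) /\
  (forall (v : X) (I : Type) (vi : I -> X) (pi : forall i, ole X (vi i) v) (x : F v),
      ole X v u -> covers v vi -> (forall i, S (vi i) (res F (pi i) x)) -> S v x).

Arguments is_subsheaf_at {X} F u S.

Definition is_sup (X : Locale) (F : PoSheaf X) (u : X)
  (S : forall v : X, F v -> Prop) (z : F u) : Prop :=
  (forall (v : X) (p : ole X v u) (y : F v), S v y -> ple F y (res F p z)) /\
  (forall z' : F u, (forall (v : X) (p : ole X v u) (y : F v), S v y -> ple F y (res F p z'))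
                    -> ple F z z').

Arguments is_sup {X} F u S z.

Definition alpha_star (X : Locale) (F G : Presheaf X) (a : forall u : X, F u -> G u)
  (u : X) (S : forall v : X, F v -> Prop) : forall v : X, G v -> Prop :=
  fun v t => forall T : forall w : X, G w -> Prop,
      is_subsheaf_at G u T ->
      (forall (w : X) (y : F w), S w y -> T w (a w y)) -> T v t.

Definition sup_preserving (X : Locale) (F G : PoSheaf X) (a : forall u : X, F u -> G u) : Prop :=
  forall (u : X) (S : forall v : X, F v -> Prop) (z : F u),
    is_subsheaf_at F u S -> is_sup F u S z -> is_sup G u (alpha_star a u S) (a u z).

Definition preserves_finite_meets (X : Locale) (F G : PoSheaf X) (a : forall u : X, F u -> G u) : Prop :=
  forall (u : X) (x y m : F u),
    is_glb2 (@ple X F u) x y m -> is_glb2 (@ple X G u) (a u x) (a u y) (a u m).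

Definition is_frame_morphism (X : Locale) (F G : PoSheaf X) (a : forall u : X, F u -> G u) : Prop :=
  sup_preserving a /\ preserves_finite_meets a.

(* Main.v *)
Require Import Defs.
From Stdlib Require Import ProofIrrelevance.
Set Implicit Arguments.
Unset Strict Implicit.

Lemma res_pi (X : Locale) (F : Presheaf X) (u v : X) (p q : ole X v u) (x : F u) :
  res F p x = res F q x.
Proof. rewrite (proof_irrelevance _ p q). reflexivity. Qed.

Lemma ole_refl (X : Locale) (u : X) : ole X u u.
Proof. destruct (ole_frame X) as [[r _] _]. apply r. Qed.

Lemma ole_trans (X : Locale) (u v w : X) : ole X u v -> ole X v w -> ole X u w.
Proof. destruct (ole_frame X) as [[_ [t _]] _]. apply t. Qed.

Lemma ple_refl (X : Locale) (F : PoSheaf X) (u : X) (x : F u) : ple F x x.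
Proof. destruct (psh_pos F) as [_ [Hp _]]. destruct (Hp u) as [r _]. apply r. Qed.

Lemma ple_trans (X : Locale) (F : PoSheaf X) (u : X) (x y z : F u) :
  ple F x y -> ple F y z -> ple F x z.
Proof. destruct (psh_pos F) as [_ [Hp _]]. destruct (Hp u) as [_ [t _]]. apply t. Qed.

Lemma ple_anti (X : Locale) (F : PoSheaf X) (u : X) (x y : F u) :
  ple F x y -> ple F y x -> x = y.
Proof. destruct (psh_pos F) as [_ [Hp _]]. destruct (Hp u) as [_ [_ t]]. apply t. Qed.

Lemma ple_mon (X : Locale) (F : PoSheaf X) (u v : X) (p : ole X v u) (x y : F u) :
  ple F x y -> ple F (res F p x) (res F p y).
Proof. destruct (psh_pos F) as [_ [_ [Hm _]]]. apply Hm. Qed.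

Lemma ple_glue (X : Locale) (F : PoSheaf X) (u : X) (I : Type) (ui : I -> X)
  (pi : forall i, ole X (ui i) u) (s t : F u) :
  covers u ui -> (forall i, ple F (res F (pi i) s) (res F (pi i) t)) -> ple F s t.
Proof. destruct (psh_pos F) as [_ [_ [_ H]]]. apply H. Qed.

Definition Down (X : Locale) (F : PoSheaf X) (u : X) (y : F u) (w : X) (t : F w) : Prop :=
  ole X w u /\ forall p : ole X w u, ple F t (res F p y).

Arguments Down {X} F {u} y w t.

Lemma down_sub (X : Locale) (F : PoSheaf X) (u v : X) (y : F v) :
  ole X v u -> is_subsheaf_at F u (Down F y).
Proof.
  intro Hvu. split; [|split].
  - intros w x [Hw _]. eapply ole_trans; eauto.
  - intros w w' p x [Hw Hx]. assert (Hw' : ole X w' v) by (eapply ole_trans; eauto).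
    split; [exact Hw'|]. intro q.
    eapply ple_trans. apply (ple_mon p (Hx Hw)).
    rewrite (@res_comp _ F _ _ _ Hw p q). apply ple_refl.
  - intros w I vi pi x _ Hcov Hi.
    assert (Hwv : ole X w v).
    { destruct Hcov as [_ Hl]. apply Hl. intros x0 [i ->]. destruct (Hi i) as [Hv _]. exact Hv. }
    split; [exact Hwv|]. intro q.
    apply (@ple_glue X F w I vi pi _ _ Hcov). intro i. destruct (Hi i) as [Hv Hx].
    rewrite (@res_comp _ F _ _ _ q (pi i) Hv). apply Hx.
Qed.

Lemma preim_sub (X : Locale) (F G : PoSheaf X) (a : forall u : X, F u -> G u)
  (Ha : is_morphism a) (u : X) (T : forall w : X, G w -> Prop) :
  is_subsheaf_at G u T -> is_subsheaf_at F u (fun w x => T w (a w x)).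
Proof.
  intros [H1 [H2 H3]]. split; [|split].
  - intros v x H. exact (H1 _ _ H).
  - intros v w p x H. rewrite Ha. apply H2. exact H.
  - intros v I vi pi x Hvu Hc Hi. apply (H3 v I vi pi); auto.
    intro i. rewrite <- Ha. apply Hi.
Qed.

Lemma and_sub (X : Locale) (F : Presheaf X) (u : X) (S1 S2 : forall w : X, F w -> Prop) :
  is_subsheaf_at F u S1 -> is_subsheaf_at F u S2 ->
  is_subsheaf_at F u (fun w x => S1 w x /\ S2 w x).
Proof.
  intros [A1 [A2 A3]] [B1 [B2 B3]]. split; [|split].
  - intros v x [H _]. eauto.
  - intros v w p x [H H']. split; eauto.
  - intros v I vi pi x Hvu Hc Hi. split.
    + apply (A3 v I vi pi); auto. intro i; apply Hi.
    + apply (B3 v I vi pi); auto. intro i; apply Hi.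
Qed.

Lemma star_le (X : Locale) (F G : PoSheaf X) (a : forall u : X, F u -> G u)
  (u : X) (S : forall v : X, F v -> Prop) (y : G u) :
  is_subsheaf_at F u S ->
  (forall w (p : ole X w u) x, S w x -> ple G (a w x) (res G p y)) ->
  forall v (p : ole X v u) t, @alpha_star _ _ _ a u S v t -> ple G t (res G p y).
Proof.
  intros [S1 _] Hb v p t Ht.
  assert (HT : Down G y v t).
  { apply Ht. apply down_sub. apply ole_refl.
    intros w x Hx. split. exact (S1 _ _ Hx). intro q. apply Hb. exact Hx. }
  destruct HT as [_ H]. apply H.
Qed.

Lemma in_star (X : Locale) (F G : Presheaf X) (a : forall u : X, F u -> G u)
  (u : X) (S : forall v : X, F v -> Prop) w x :
  S w x -> @alpha_star _ _ _ a u S w (a w x).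
Proof. intros H T _ HT. apply HT. exact H. Qed.

Theorem lemma3p3 (X : Locale) (F G : PoSheaf X)
  (HF : is_frame_sheaf F) (HG : is_frame_sheaf G)
  (a : forall u : X, F u -> G u)
  (Ha : is_morphism a) (Hord : order_preserving a) :
  is_frame_morphism a <->
  ((forall u : X, is_frame_hom (@ple X F u) (@ple X G u) (a u)) /\
   (forall (u v : X) (p : ole X v u) (f : F v -> F u) (g : G v -> G u),
       is_left_adjoint F p f -> is_left_adjoint G p g ->
       forall y : F v, a u (f y) = g (a v y))).
Proof.
  split.
  - intros [Hsup Hmeet]. split.
    + intro u. split; [|apply Hmeet].
      intros S z Hz. split.
      * intros b [x [Sx ->]]. apply Hord. apply Hz. exact Sx.
      * intros y Hy.
        set (S' := fun w x => Down F z w x /\ Down G y w (a w x)).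
        assert (HS' : is_subsheaf_at F u S').
        { apply and_sub. apply down_sub, ole_refl.
          apply (preim_sub Ha (T := Down G y)). apply down_sub, ole_refl. }
        assert (Hsz : is_sup F u S' z).
        { split.
          - intros v p x [[_ Hx] _]. apply Hx.
          - intros z' Hz'. apply Hz. intros s Ss.
            assert (HSs : S' u s).
            { split; split; try apply ole_refl; intro p.
              - rewrite res_id. apply Hz. exact Ss.
              - rewrite res_id. apply Hy. exists s; auto. }
            pose proof (Hz' u (ole_refl u) s HSs) as Hq. rewrite res_id in Hq. exact Hq. }
        destruct (Hsup u S' z HS' Hsz) as [_ Hl].
        apply Hl. apply star_le. exact HS'.
        intros w p x [_ [_ Hx]]. apply Hx.
    + intros u v p f g Hf Hg y.
      assert (HS : is_subsheaf_at F u (Down F y)) by (apply down_sub; exact p).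
      assert (Hfy : ple F y (res F p (f y))) by (apply Hf; apply ple_refl).
      assert (Hgy : ple G (a v y) (res G p (g (a v y)))) by (apply Hg; apply ple_refl).
      assert (Hyy : Down F y v y).
      { split. apply ole_refl. intro q. rewrite res_id. apply ple_refl. }
      assert (H1 : is_sup F u (Down F y) (f y)).
      { split.
        - intros w q x [Hwv Hx]. eapply ple_trans. apply (Hx Hwv).
          eapply ple_trans. apply (ple_mon Hwv Hfy).
          rewrite (@res_comp _ F _ _ _ p Hwv q). apply ple_refl.
        - intros z' Hz'. apply Hf. apply Hz'. exact Hyy. }
      destruct (Hsup u _ _ HS H1) as [U1 L1].
      assert (U2 : forall w (q : ole X w u) t, @alpha_star _ _ _ a u (Down F y) w t ->
                   ple G t (res G q (g (a v y)))).
      { apply star_le. exact HS. intros w q x [Hwv Hx].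
        eapply ple_trans. apply Hord. apply (Hx Hwv). rewrite Ha.
        eapply ple_trans. apply (ple_mon Hwv Hgy).
        rewrite (@res_comp _ G _ _ _ p Hwv q). apply ple_refl. }
      apply ple_anti.
      * apply L1. exact U2.
      * apply Hg. apply U1. apply in_star. exact Hyy.
  - intros [Hhom Hcomm]. split.
    + intros u S z HS [Hup Hlst]. split.
      * apply star_le. exact HS. intros w p x Hx. rewrite <- Ha. apply Hord. apply Hup. exact Hx.
      * intros z' Hz'.
        set (L := fun c : F u => exists w (p : ole X w u) x (f : F w -> F u),
                    S w x /\ is_left_adjoint F p f /\ c = f x).
        assert (HL : is_lub (@ple X F u) L z).
        { split.
          - intros c [w [p [x [f [Sx [Hf ->]]]]]]. apply Hf. apply Hup. exact Sx.
          - intros y Hy. apply Hlst. intros w p x Sx.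
            destruct HF as [_ Hadj]. destruct (Hadj u w p) as [_ [[l [Hl _]] _]].
            apply Hl. apply Hy. exists w, p, x, l. auto. }
        destruct ((proj1 (Hhom u)) L z HL) as [_ Hl2].
        apply Hl2. intros b [c [[w [p [x [f [Sx [Hf ->]]]]]] ->]].
        destruct HG as [_ Hadj]. destruct (Hadj u w p) as [_ [[g [Hg _]] _]].
        rewrite (Hcomm u w p f g Hf Hg x). apply Hg. apply Hz'. apply in_star. exact Sx.
    + intros u x y m H. exact ((proj2 (Hhom u)) _ _ _ H).
Qed.
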